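(* Let $\beta>0$ and $\varepsilon>0$, and let $q_0,q_1$ be the probability distributions on four outcomes given by $$q_0=\frac1{Z_0}\bigl(e^{2\beta},1,e^{-\beta},e^{-\beta}\bigr),\qquad q_1=\frac1{Z_1}\bigl(e^{2\beta},1,e^{-\beta+2\beta\varepsilon},e^{-\beta-2\beta\varepsilon}\bigr),$$ with $Z_0,Z_1$ the normalizing constants. Then $\mathrm{D}(q_1\|q_0)\le8\beta^2\varepsilon^2e^{-3\beta+2\beta\varepsilon}$. When $\varepsilon\le1/2$, $\mathrm{D}(q_1\|q_0)\le8\beta^2\varepsilon^2e^{-2\beta}$.
   Context: $\mathrm{D}(p\|q)=\sum_jp_j\log(p_j/q_j)$ is the Kullback–Leibler divergence (natural logarithm). These are the diagonal Gibbs distributions at inverse temperature $\beta$ of the two-qubit diagonal Hamiltonians $H_0=\mathrm{diag}(-2,0,1,1)$ and $H_1=\mathrm{diag}(-2,0,1+2\varepsilon,1-2\varepsilon)$. *)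

(* Defs.v *)
From Stdlib Require Import Reals Lra.
Open Scope R_scope.

Definition KL4 (p q : nat -> R) : R :=
  sum_f_R0 (fun j => p j * ln (p j / q j)) 3.

Definition w0 (beta : R) (j : nat) : R :=
  match j with
  | 0%nat => exp (2 * beta)
  | 1%nat => 1
  | 2%nat => exp (- beta)
  | _ => exp (- beta)
  end.

Definition w1 (beta eps : R) (j : nat) : R :=
  match j with
  | 0%nat => exp (2 * beta)
  | 1%nat => 1
  | 2%nat => exp (- beta + 2 * beta * eps)
  | _ => exp (- beta - 2 * beta * eps)
  end.

Definition Z0 (beta : R) : R := sum_f_R0 (w0 beta) 3.
Definition Z1 (beta eps : R) : R := sum_f_R0 (w1 beta eps) 3.
Definition q0 (beta : R) (j : nat) : R := w0 beta j / Z0 beta.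
Definition q1 (beta eps : R) (j : nat) : R := w1 beta eps j / Z1 beta eps.

(* Main.v *)
Require Import Defs.
From Stdlib Require Import Reals Lra Psatz.
Open Scope R_scope.

Lemma ln_split (x y Za Zb : R) : 0 < x -> 0 < y -> 0 < Za -> 0 < Zb ->
  ln ((x / Zb) / (y / Za)) = ln (x / y) + ln (Za / Zb).
Proof.
  intros. rewrite <- ln_mult.
  - f_equal. field. lra.
  - apply Rdiv_lt_0_compat; lra.
  - apply Rdiv_lt_0_compat; lra.
Qed.

Theorem lemma5p1 (beta eps : R) (hbeta : 0 < beta) (heps : 0 < eps) :
  KL4 (q1 beta eps) (q0 beta)
    <= 8 * beta ^ 2 * eps ^ 2 * exp (- 3 * beta + 2 * beta * eps)
  /\ (eps <= 1 / 2 ->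
      KL4 (q1 beta eps) (q0 beta) <= 8 * beta ^ 2 * eps ^ 2 * exp (- 2 * beta)).
Proof.
  set (t := 2 * beta * eps).
  assert (ht : 0 < t) by (unfold t; nra).
  assert (Hmain : KL4 (q1 beta eps) (q0 beta) <= 2 * t ^ 2 * exp (- 3 * beta + t)).
  { unfold KL4, q1, q0, Z1, Defs.Z0. simpl. fold t.
    set (A := exp (2 * beta)). set (c := exp (- beta)).
    assert (EA : A * (c * c) = 1).
    { unfold A, c. rewrite <- !exp_plus. replace (2 * beta + (- beta + - beta)) with 0 by ring. apply exp_0. }
    assert (Eu : exp (- beta + t) = c * exp t) by (unfold c; apply exp_plus).
    assert (Ev : exp (- beta - t) = c * exp (- t)).
    { unfold c; rewrite <- exp_plus; f_equal; ring. }
    assert (Euv : exp t * exp (- t) = 1).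
    { rewrite <- exp_plus. replace (t + - t) with 0 by ring. apply exp_0. }
    assert (E3 : exp (- 3 * beta + t) = c * c * c * exp t).
    { unfold c. rewrite <- !exp_plus. f_equal. ring. }
    rewrite Eu, Ev, E3.
    set (u := exp t) in *. set (v := exp (- t)) in *.
    assert (hA : 0 < A) by apply exp_pos.
    assert (hc : 0 < c) by apply exp_pos.
    assert (hu : 0 < u) by apply exp_pos.
    assert (hv : 0 < v) by apply exp_pos.
    assert (hv2 : 1 - 2 * t <= v * v).
    { unfold v. rewrite <- exp_plus. pose proof (exp_ineq1_le (- t + - t)). lra. }
    assert (lu : ln u = t) by (unfold u; apply ln_exp).
    assert (lv : ln v = - t) by (unfold v; apply ln_exp).
    assert (hu1 : 1 <= u) by (unfold u; pose proof (exp_ineq1_le t); lra).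
    clearbody u v c A.
    set (Za := A + 1 + c + c). set (Zb := A + 1 + c * u + c * v).
    assert (hZa : 0 < Za) by (unfold Za; lra).
    assert (hcu : 0 < c * u) by (apply Rmult_lt_0_compat; lra).
    assert (hcv : 0 < c * v) by (apply Rmult_lt_0_compat; lra).
    assert (hZb : 0 < Zb) by (unfold Zb; lra).
    assert (hle : Za <= Zb).
    { unfold Za, Zb. assert (u + v >= 2).
      { pose proof (Rle_0_sqr (u - 1)) as Hs; unfold Rsqr in Hs.
        assert (u * (u + v) = u * u + 1) by (rewrite Rmult_plus_distr_l, Euv; ring). nra. }
      nra. }
    assert (hL : ln (Za / Zb) <= 0).
    { rewrite <- ln_1. destruct (Req_dec Za Zb) as [E|E].
      - rewrite E. replace (Zb / Zb) with 1 by (field; lra). lra.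
      - left. apply ln_increasing. apply Rdiv_lt_0_compat; lra.
        apply (Rmult_lt_reg_r Zb); [lra|]. unfold Rdiv. rewrite Rmult_assoc, Rinv_l; lra. }
    rewrite !ln_split; try lra; try nra.
    replace (A / A) with 1 by (field; lra).
    replace (1 / 1) with 1 by field.
    replace (c * u / c) with u by (field; lra).
    replace (c * v / c) with v by (field; lra).
    rewrite ln_1, lu, lv.
    set (L := ln (Za / Zb)) in *.
    replace (A / Zb * (0 + L) + 1 / Zb * (0 + L) + c * u / Zb * (t + L) + c * v / Zb * (- t + L))
      with (L * (Zb / Zb) + t * c * (u - v) / Zb) by (unfold Zb; field; lra).
    replace (Zb / Zb) with 1 by (field; lra).
    assert (t * c * (u - v) / Zb <= 2 * t ^ 2 * (c * c * c * u)); [|lra].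
    apply (Rmult_le_reg_r Zb); [lra|].
    replace (t * c * (u - v) / Zb * Zb) with (t * c * (u - v)) by (field; lra).
    assert (Zb >= A) by (unfold Zb; nra).
    (* u - v <= 2 t u since v*v >= 1-2t and u v = 1 *)
    assert (u - v <= 2 * t * u).
    { assert (u * (v * v) = v) by (rewrite <- Rmult_assoc, Euv; ring). nra. }
    assert (t * c * (u - v) <= 2 * t ^ 2 * (c * c * c * u) * A).
    { replace (2 * t ^ 2 * (c * c * c * u) * A) with (t * c * (2 * t * u) * (A * (c * c))) by ring.
      rewrite EA; rewrite Rmult_1_r. apply Rmult_le_compat_l; nra. }
    assert (hv1 : v <= 1) by nra.
    assert (0 <= 2 * t ^ 2 * (c * c * c * u)).
    { repeat apply Rmult_le_pos; try lra. }
    assert (2 * t ^ 2 * (c * c * c * u) * A <= 2 * t ^ 2 * (c * c * c * u) * Zb)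
      by (apply Rmult_le_compat_l; lra).
    lra. }
  split.
  - unfold t in Hmain. replace (8 * beta ^ 2 * eps ^ 2) with (2 * (2 * beta * eps) ^ 2) by ring. exact Hmain.
  - intros he. eapply Rle_trans; [exact Hmain|].
    replace (8 * beta ^ 2 * eps ^ 2) with (2 * t ^ 2) by (unfold t; ring).
    apply Rmult_le_compat_l; [nra|].
    assert (Hle : - 3 * beta + t <= - 2 * beta) by (unfold t; nra).
    destruct Hle as [Hl|Hl]; [left; apply exp_increasing; exact Hl | rewrite Hl; lra].
Qed.
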